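(* There exists a unique algebra homomorphism $\widetilde\natural:\mathcal H_q\to\mathfrak{W}_q$ sending $A\mapsto K_2^{-1}$, $B\mapsto \widetilde\Delta(\Lambda)=(q-q^{-1})^2(E_1+K_1^{-1}E_2)(F_1K_2+F_2)+q^{-1}K_1K_2+qK_1^{-1}K_2^{-1}$, and $C\mapsto IK_1^{-1}-q(q-q^{-1})^2E_1F_2K_2^{-1}$. Moreover $\widetilde\natural(\alpha)=\Lambda_2+\Lambda_1K_1^{-1}K_2^{-1}$, $\widetilde\natural(\beta)=IK_1^{-1}K_2^{-1}$ and $\widetilde\natural(\gamma)=\Lambda_1+\Lambda_2K_1^{-1}K_2^{-1}$.
   Context: Throughout, $q$ is a nonzero complex number that is not a root of unity; $[x,y]=xy-yx$ and $[x,y]_q=qxy-q^{-1}yx$. $\mathfrak{W}_q$ is the algebra over $\mathbb C$ generated by $E_1,E_2,F_1,F_2,K_1^{\pm1},K_2^{\pm1},I^{\pm1}$ subject to: $I$ is central; $II^{-1}=I^{-1}I=1$, $K_1K_1^{-1}=K_1^{-1}K_1=1$, $K_2K_2^{-1}=K_2^{-1}K_2=1$; $[K_1,E_2]=[K_1,F_2]=[K_1,K_2]=[K_2,E_1]=[K_2,F_1]=0$; $[E_1,K_1]_q=[K_1,F_1]_q=[E_2,K_2]_q=[K_2,F_2]_q=0$; $[E_1,E_2]=[E_1,F_2]=[F_1,E_2]=[F_1,F_2]=0$; $[E_1,F_1]=\frac{K_1-IK_1^{-1}}{q-q^{-1}}$; $[E_2,F_2]=\frac{IK_2-K_2^{-1}}{q-q^{-1}}$.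 $\Lambda_1=(q-q^{-1})^2E_1F_1+q^{-1}K_1+qIK_1^{-1}$, $\Lambda_2=(q-q^{-1})^2E_2F_2+q^{-1}IK_2+qK_2^{-1}$. The universal $q$-Hahn algebra $\mathcal H_q$ is the algebra over $\mathbb C$ generated by $A,B,C$ subject to the relations that each of $\frac{[B,C]_q}{q^2-q^{-2}}+A$, $[C,A]_q$, $\frac{[A,B]_q}{q^2-q^{-2}}+C$ commutes with $A,B,C$. Its central elements $\alpha,\beta,\gamma$ are $\alpha=\frac{[B,C]_q}{q-q^{-1}}+(q+q^{-1})A$, $\beta=\frac{[C,A]_q}{q-q^{-1}}$, $\gamma=\frac{[A,B]_q}{q-q^{-1}}+(q+q^{-1})C$. *)

(* Defs.v *)
From HB Require Import structures.
From mathcomp Require Import all_boot all_algebra.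
From mathcomp Require Import Rstruct complex.
Set Implicit Arguments. Unset Strict Implicit. Unset Printing Implicit Defensive.
Import GRing.Theory.
Local Open Scope ring_scope.

Definition Cplx : numClosedFieldType := Rdefinitions.R[i].

Definition not_root_of_unity (q : Cplx) : Prop :=
  q != 0 /\ forall n : nat, (0 < n)%N -> q ^+ n != 1.

Section Brackets.
Variable A : algType Cplx.
Definition comm (x y : A) : A := x * y - y * x.
Definition qcomm (q : Cplx) (x y : A) : A := q *: (x * y) - q^-1 *: (y * x).
End Brackets.

(* A choice of the 10 generators E1,E2,F1,F2,K1,K1^{-1},K2,K2^{-1},I,I^{-1}
   (the inverses are separate generators, as in the presentation). *)
Record Wgens (A : algType Cplx) := mkWgens {
  wE1 : A; wE2 : A; wF1 : A; wF2 : A;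
  wK1 : A; wK1i : A; wK2 : A; wK2i : A; wI : A; wIi : A }.

Definition Wrel (q : Cplx) (A : algType Cplx) (g : Wgens A) : Prop :=
  let E1 := wE1 g in let E2 := wE2 g in let F1 := wF1 g in let F2 := wF2 g in
  let K1 := wK1 g in let K1i := wK1i g in let K2 := wK2 g in
  let K2i := wK2i g in let I := wI g in let Ii := wIi g in
  (comm I E1 = 0 /\ comm I E2 = 0 /\ comm I F1 = 0 /\ comm I F2 = 0 /\
   comm I K1 = 0 /\ comm I K1i = 0 /\ comm I K2 = 0 /\ comm I K2i = 0 /\
   comm I Ii = 0) /\
  (I * Ii = 1 /\ Ii * I = 1 /\ K1 * K1i = 1 /\ K1i * K1 = 1 /\
   K2 * K2i = 1 /\ K2i * K2 = 1) /\
  [/\ comm K1 E2 = 0, comm K1 F2 = 0, comm K1 K2 = 0,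
      comm K2 E1 = 0 & comm K2 F1 = 0] /\
  [/\ qcomm q E1 K1 = 0, qcomm q K1 F1 = 0,
      qcomm q E2 K2 = 0 & qcomm q K2 F2 = 0] /\
  [/\ comm E1 E2 = 0, comm E1 F2 = 0, comm F1 E2 = 0 & comm F1 F2 = 0] /\
  comm E1 F1 = (q - q^-1)^-1 *: (K1 - I * K1i) /\
  comm E2 F2 = (q - q^-1)^-1 *: (I * K2 - K2i).

Definition Wmaps (A B : algType Cplx) (f : A -> B) (g : Wgens A) (h : Wgens B) :=
  f (wE1 g) = wE1 h /\ f (wE2 g) = wE2 h /\ f (wF1 g) = wF1 h /\
  f (wF2 g) = wF2 h /\ f (wK1 g) = wK1 h /\ f (wK1i g) = wK1i h /\
  f (wK2 g) = wK2 h /\ f (wK2i g) = wK2i h /\ f (wI g) = wI h /\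
  f (wIi g) = wIi h.

(* (A, g) is a presentation of W_q: g satisfies the relations and (A, g) is
   universal, i.e. A is the algebra generated by g subject to the relations. *)
Definition is_Wq (q : Cplx) (A : algType Cplx) (g : Wgens A) : Prop :=
  Wrel q g /\
  forall (B : algType Cplx) (h : Wgens B), Wrel q h ->
    exists f : {lrmorphism A -> B}, Wmaps f g h /\
      forall f' : {lrmorphism A -> B}, Wmaps f' g h -> forall x, f' x = f x.

Definition Lambda1 (q : Cplx) (A : algType Cplx) (g : Wgens A) : A :=
  (q - q^-1) ^+ 2 *: (wE1 g * wF1 g) + q^-1 *: wK1 g + q *: (wI g * wK1i g).
Definition Lambda2 (q : Cplx) (A : algType Cplx) (g : Wgens A) : A :=
  (q - q^-1) ^+ 2 *: (wE2 g * wF2 g) + q^-1 *: (wI g * wK2 g) + q *: wK2i g.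

Definition Hrel (q : Cplx) (A : algType Cplx) (a b c : A) : Prop :=
  let X1 := (q ^+ 2 - q^-2)^-1 *: qcomm q b c + a in
  let X2 := qcomm q c a in
  let X3 := (q ^+ 2 - q^-2)^-1 *: qcomm q a b + c in
  (comm X1 a = 0 /\ comm X1 b = 0 /\ comm X1 c = 0) /\
  (comm X2 a = 0 /\ comm X2 b = 0 /\ comm X2 c = 0) /\
  (comm X3 a = 0 /\ comm X3 b = 0 /\ comm X3 c = 0).

Definition is_Hq (q : Cplx) (H : algType Cplx) (a b c : H) : Prop :=
  Hrel q a b c /\
  forall (B : algType Cplx) (a' b' c' : B), Hrel q a' b' c' ->
    exists f : {lrmorphism H -> B}, [/\ f a = a', f b = b' & f c = c'] /\
      forall f' : {lrmorphism H -> B}, [/\ f' a = a', f' b = b' & f' c = c'] ->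
        forall x, f' x = f x.

Definition Halpha (q : Cplx) (H : algType Cplx) (a b c : H) : H :=
  (q - q^-1)^-1 *: qcomm q b c + (q + q^-1) *: a.
Definition Hbeta (q : Cplx) (H : algType Cplx) (a b c : H) : H :=
  (q - q^-1)^-1 *: qcomm q c a.
Definition Hgamma (q : Cplx) (H : algType Cplx) (a b c : H) : H :=
  (q - q^-1)^-1 *: qcomm q a b + (q + q^-1) *: c.

(* Main.v *)
Require Import Defs.
From HB Require Import structures.
From mathcomp Require Import all_boot all_algebra.
From mathcomp Require Import Rstruct complex.
From mathcomp Require Import ring.
Set Implicit Arguments. Unset Strict Implicit. Unset Printing Implicit Defensive.
Import GRing.Theory.
Local Open Scope ring_scope.

(* Proof strategy: a verified reflective normal-ordering procedure for the
   relations of W_q (coefficients are Laurent polynomials in q and (q-q^-1)^-1). *)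

Definition lmon := (int * int)%type.
Definition cmon := (int * int * nat)%type.

Definition lmul (l1 l2 : seq lmon) : seq lmon :=
  [seq (m.1 * n.1, m.2 + n.2) | m <- l1, n <- l2].
Fixpoint pw (n : nat) : seq lmon :=
  match n with 0 => [:: (1, 0)] | n'.+1 => lmul [:: (1, 1); (-1, -1)] (pw n') end.
Definition cmax (c : seq cmon) : nat := foldr (fun m n => maxn m.2 n) 0%N c.
Definition lclear (N : nat) (c : seq cmon) : seq lmon :=
  flatten [seq lmul [:: (m.1.1, m.1.2)] (pw (N - m.2)) | m <- c].
Fixpoint lz (n : nat) (l : seq lmon) : bool :=
  match n with
  | 0 => nilp l
  | n'.+1 => match l with
     | [::] => true
     | m :: r => (m.1 + foldr (fun x acc => x.1 + acc) 0 [seq x <- r | x.2 == m.2] == 0)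
                 && lz n' [seq x <- r | x.2 != m.2]
     end
  end.
Definition czero (c : seq cmon) : bool := lz (size (lclear (cmax c) c)) (lclear (cmax c) c).
Definition cmul (c1 c2 : seq cmon) : seq cmon :=
  [seq (m.1.1 * n.1.1, m.1.2 + n.1.2, (m.2 + n.2)%N) | m <- c1, n <- c2].

Section Coef.
Variables (F : fieldType) (q : F).
Hypothesis hq0 : q != 0.
Hypothesis hqs : q - q^-1 != 0.
Definition sq := (q - q^-1)^-1.
Definition lev (l : seq lmon) : F := foldr (fun m acc => m.1%:~R * q ^ m.2 + acc) 0 l.
Definition cev (c : seq cmon) : F :=
  foldr (fun m acc => m.1.1%:~R * q ^ m.1.2 * sq ^+ m.2 + acc) 0 c.

Lemma lev_cat l1 l2 : lev (l1 ++ l2) = lev l1 + lev l2.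
Proof. by elim: l1 => [|m l IH] /=; rewrite ?add0r // IH addrA. Qed.
Lemma cev_cat l1 l2 : cev (l1 ++ l2) = cev l1 + cev l2.
Proof. by elim: l1 => [|m l IH] /=; rewrite ?add0r // IH addrA. Qed.

Lemma lev_mul l1 l2 : lev (lmul l1 l2) = lev l1 * lev l2.
Proof.
rewrite /lmul; elim: l1 => [|m l IH] /=; first by rewrite mul0r.
rewrite lev_cat IH mulrDl; congr (_ + _).
clear IH; elim: l2 => [|n l2 IH2] /=; first by rewrite mulr0.
by rewrite IH2 mulrDr intrM expfzDr // mulrACA.
Qed.

Lemma lev_pw n : lev (pw n) = (q - q^-1) ^+ n.
Proof.
elim: n => [|n IH] /=; first by rewrite expr0z mulr1 addr0.
by rewrite lev_mul IH /= expr1z exprN1 mul1r addr0 exprS mulN1r.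
Qed.

Lemma cev_mul c1 c2 : cev (cmul c1 c2) = cev c1 * cev c2.
Proof.
rewrite /cmul; elim: c1 => [|m l IH] /=; first by rewrite mul0r.
rewrite cev_cat IH mulrDl; congr (_ + _).
clear IH; elim: c2 => [|n l2 IH2] /=; first by rewrite mulr0.
rewrite IH2 mulrDr intrM expfzDr // exprD; congr (_ + _).
by ring.
Qed.

Lemma lev_lclear N c : (forall m, m \in c -> (m.2 <= N)%N) ->
  lev (lclear N c) = (q - q^-1) ^+ N * cev c.
Proof.
elim: c => [|m c IH] /= H; first by rewrite mulr0.
rewrite lev_cat IH; last by move=> x hx; apply: H; rewrite inE hx orbT.
rewrite mulrDr; congr (_ + _).
rewrite lev_mul lev_pw /= addr0.
have hb : (m.2 <= N)%N by apply: H; rewrite inE eqxx.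
have E : (q - q^-1) ^+ N = (q - q^-1) ^+ (N - m.2) * (q - q^-1) ^+ m.2
  by rewrite -exprD subnK.
have H1 : (q - q^-1) ^+ m.2 * sq ^+ m.2 = 1 by rewrite /sq -exprMn mulfV // expr1n.
rewrite E -[in LHS](mulr1 (_ * _)) -H1; ring.
Qed.

Lemma cmax_ge c m : m \in c -> (m.2 <= cmax c)%N.
Proof.
elim: c => [|x c IH] //=; rewrite inE => /orP [/eqP ->|h].
  by rewrite leq_maxl.
by rewrite (leq_trans (IH h)) // leq_maxr.
Qed.

Lemma lev_split (P : pred lmon) l :
  lev l = lev [seq x <- l | P x] + lev [seq x <- l | ~~ P x].
Proof.
elim: l => [|m l IH] /=; first by rewrite addr0.
by case: (P m) => /=; rewrite IH; [rewrite addrA | rewrite addrCA].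
Qed.

Lemma lev_same a l : all (fun x : lmon => x.2 == a) l ->
  lev l = (foldr (fun x acc => x.1 + acc) 0 l)%:~R * q ^ a.
Proof.
elim: l => [|m l IH] /=; first by rewrite mul0r.
by case/andP=> /eqP -> h; rewrite IH // intrD mulrDl.
Qed.

Lemma lz_sound n l : lz n l -> lev l = 0.
Proof.
elim: n l => [|n IH] [|m l] //= /andP [/eqP h1 h2].
rewrite (lev_split (fun x => x.2 == m.2) l) (IH _ h2) addr0.
rewrite (@lev_same m.2); last by apply/allP=> x; rewrite mem_filter => /andP [].
by rewrite -mulrDl -intrD h1 mul0r.
Qed.

Lemma czero_sound c : czero c -> cev c = 0.
Proof.
move=> /lz_sound; rewrite lev_lclear; last by move=> m; apply: cmax_ge.
by move/eqP; rewrite mulf_eq0 expf_eq0 (negbTE hqs) andbF /= => /eqP.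
Qed.
End Coef.

Definition poly := seq (seq cmon * seq nat).
Definition cm (k a : int) (b : nat) : seq cmon := [:: (k, a, b)].
Definition sw (a : int) (y x : nat) : poly := [:: (cm (Posz 1) a 0%N, [:: y; x])].
Definition one : poly := [:: (cm (Posz 1) (Posz 0) 0%N, [::])].
Definition pscale (c : seq cmon) (p : poly) : poly := [seq (cmul c m.1, m.2) | m <- p].
Definition pmul (p r : poly) : poly := [seq (cmul m.1 n.1, m.2 ++ n.2) | m <- p, n <- r].

Definition rule (x y : nat) : option poly :=
  match x, y with
  | 1, 0 => Some (sw 0 0 1)
  | 2, 0 => Some (sw (Posz 2) 0 2)
  | 2, 1 => Some (sw 0 1 2)
  | 2, 3 => Some one
  | 3, 0 => Some (sw (Negz 1) 0 3)
  | 3, 1 => Some (sw 0 1 3)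
  | 3, 2 => Some one
  | 4, 0 => Some (sw 0 0 4)
  | 4, 1 => Some (sw (Posz 2) 1 4)
  | 4, 2 => Some (sw 0 2 4)
  | 4, 3 => Some (sw 0 3 4)
  | 4, 5 => Some one
  | 5, 0 => Some (sw 0 0 5)
  | 5, 1 => Some (sw (Negz 1) 1 5)
  | 5, 2 => Some (sw 0 2 5)
  | 5, 3 => Some (sw 0 3 5)
  | 5, 4 => Some one
  | 6, 0 => Some (sw 0 0 6)
  | 6, 1 => Some (sw 0 1 6)
  | 6, 2 => Some (sw 0 2 6)
  | 6, 3 => Some (sw 0 3 6)
  | 6, 4 => Some (sw 0 4 6)
  | 6, 5 => Some (sw 0 5 6)
  | 7, 0 => Some [:: (cm (Posz 1) 0 0, [:: 0; 7]%N); (cm (Negz 0) 0 1, [:: 2]%N);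
                    (cm (Posz 1) 0 1, [:: 3; 6]%N)]
  | 7, 1 => Some (sw 0 1 7)
  | 7, 2 => Some (sw (Posz 2) 2 7)
  | 7, 3 => Some (sw (Negz 1) 3 7)
  | 7, 4 => Some (sw 0 4 7)
  | 7, 5 => Some (sw 0 5 7)
  | 7, 6 => Some (sw 0 6 7)
  | 8, 0 => Some (sw 0 0 8)
  | 8, 1 => Some [:: (cm (Posz 1) 0 0, [:: 1; 8]%N); (cm (Negz 0) 0 1, [:: 4; 6]%N);
                    (cm (Posz 1) 0 1, [:: 5]%N)]
  | 8, 2 => Some (sw 0 2 8)
  | 8, 3 => Some (sw 0 3 8)
  | 8, 4 => Some (sw (Posz 2) 4 8)
  | 8, 5 => Some (sw (Negz 1) 5 8)
  | 8, 6 => Some (sw 0 6 8)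
  | 8, 7 => Some (sw 0 7 8)
  | _, _ => None
  end%N.

Fixpoint rw (w : seq nat) : option poly :=
  match w with
  | x :: ((y :: t) as t') =>
      match rule x y with
      | Some p => Some [seq (m.1, m.2 ++ t) | m <- p]
      | None => match rw t' with
                | Some p => Some [seq (m.1, x :: m.2) | m <- p]
                | None => None end
      end
  | _ => None
  end.

Definition step (p : poly) : poly :=
  flatten [seq match rw m.2 with Some p' => pscale m.1 p' | None => [:: m] end | m <- p].
Fixpoint nf (n : nat) (p : poly) : poly :=
  match n with 0 => p | n'.+1 => nf n' (step p) end.

Fixpoint pz (n : nat) (p : poly) : bool :=
  match n with
  | 0 => nilp p
  | n'.+1 => match p with
     | [::] => true
     | m :: r => czero (m.1 ++ flatten [seq x.1 | x <- r & x.2 == m.2])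
                 && pz n' [seq x <- r | x.2 != m.2]
     end
  end.

Lemma sclAA (A : algType Cplx) (a b : Cplx) (x y : A) :
  (a * b) *: (x * y) = (a *: x) * (b *: y).
Proof. by rewrite -scalerAl -scalerCA -scalerAl scalerA. Qed.

Lemma auxB (V : lmodType Cplx) (s : Cplx) (x k i : V) :
  x - s *: (k - i) = x + (- (s *: k) + s *: i).
Proof. by rewrite scalerBr opprB [s *: i - _]addrC. Qed.

Inductive sx := SQ | SQi | SS | SAdd of sx & sx | SSub of sx & sx
  | SMul of sx & sx | SExp of sx & nat.
Inductive wx := XG of nat | XAdd of wx & wx | XSub of wx & wx | XMul of wx & wx
  | XScale of sx & wx | XOne | XZero.
Fixpoint s2c (e : sx) : seq cmon :=
  match e with
  | SQ => cm (Posz 1) (Posz 1) 0%N | SQi => cm (Posz 1) (Negz 0) 0%N | SS => cm (Posz 1) (Posz 0) 1%N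
  | SAdd a b => s2c a ++ s2c b
  | SSub a b => s2c a ++ cmul (cm (Negz 0) (Posz 0) 0%N) (s2c b)
  | SMul a b => cmul (s2c a) (s2c b)
  | SExp a n => iter n (cmul (s2c a)) (cm (Posz 1) (Posz 0) 0%N)
  end.
Fixpoint w2p (e : wx) : poly :=
  match e with
  | XG n => [:: (cm (Posz 1) (Posz 0) 0%N, [:: n])]
  | XAdd a b => w2p a ++ w2p b
  | XSub a b => w2p a ++ pscale (cm (Negz 0) (Posz 0) 0%N) (w2p b)
  | XMul a b => pmul (w2p a) (w2p b)
  | XScale c a => pscale (s2c c) (w2p a)
  | XOne => one
  | XZero => [::]
  end.
Definition check (e : wx) : bool := let p := nf 200 (w2p e) in pz (size p) p.

Section NC.
Variables (q : Cplx) (W : algType Cplx) (g : Wgens W).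
Hypothesis hq0 : q != 0.
Hypothesis hqs : q - q^-1 != 0.
Hypothesis hW : Wrel q g.

Definition gen (n : nat) : W :=
  match n with
  | 0 => wE1 g | 1 => wE2 g | 2 => wK1 g | 3 => wK1i g | 4 => wK2 g
  | 5 => wK2i g | 6 => wI g | 7 => wF1 g | _ => wF2 g end.
Definition wev (w : seq nat) : W := foldr (fun n acc => gen n * acc) 1 w.
Definition pev (p : poly) : W := foldr (fun m acc => cev q m.1 *: wev m.2 + acc) 0 p.

Lemma wev_cat w1 w2 : wev (w1 ++ w2) = wev w1 * wev w2.
Proof. by elim: w1 => [|x w IH] /=; rewrite ?mul1r // IH mulrA. Qed.
Lemma pev_cat p1 p2 : pev (p1 ++ p2) = pev p1 + pev p2.
Proof. by elim: p1 => [|m l IH] /=; rewrite ?add0r // IH addrA. Qed.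
Lemma pev_scale c p : pev (pscale c p) = cev q c *: pev p.
Proof.
elim: p => [|m p IH] /=; first by rewrite scaler0.
by rewrite IH cev_mul // scalerDr scalerA.
Qed.
Lemma pev_mul p r : pev (pmul p r) = pev p * pev r.
Proof.
rewrite /pmul; elim: p => [|m l IH] /=; first by rewrite mul0r.
rewrite pev_cat IH mulrDl; congr (_ + _).
clear IH; elim: r => [|n l2 IH2] /=; first by rewrite mulr0.
rewrite IH2 mulrDr cev_mul // wev_cat; congr (_ + _).
exact: sclAA.
Qed.
Lemma pev_sw a y x : pev (sw a y x) = q ^ a *: (gen y * gen x).
Proof. by rewrite /= mul1r !mulr1 !addr0. Qed.
Lemma pev_one : pev one = 1.
Proof. by rewrite /= mul1r !mulr1 !addr0 expr0z scale1r. Qed.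

Lemma commE (x y : W) : comm x y = 0 -> x * y = y * x.
Proof. by move/eqP; rewrite subr_eq0 => /eqP. Qed.
Lemma qcommE (x y : W) : qcomm q x y = 0 -> y * x = q ^+ 2 *: (x * y).
Proof.
move/eqP; rewrite subr_eq0 => /eqP h.
have e : q *: (q *: (x * y)) = y * x by rewrite h scalerA mulfV // scale1r.
by rewrite -e scalerA expr2.
Qed.
Lemma inv_twist (k ki x : W) c : k * ki = 1 -> ki * k = 1 -> c != 0 ->
  k * x = c *: (x * k) -> ki * x = c^-1 *: (x * ki).
Proof.
move=> h1 h2 hc h.
have e : x * k = c^-1 *: (k * x) by rewrite h scalerA mulVf // scale1r.
rewrite -[ki * x]mulr1 -h1 mulrA -(mulrA ki) e -scalerCA -!scalerAl.
by rewrite mulrA h2 mul1r.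
Qed.
Lemma inv_twistr (k ki x : W) c : k * ki = 1 -> ki * k = 1 -> c != 0 ->
  x * k = c *: (k * x) -> x * ki = c^-1 *: (ki * x).
Proof.
move=> h1 h2 hc h.
have e : k * x = c^-1 *: (x * k) by rewrite h scalerA mulVf // scale1r.
rewrite -[x * ki]mul1r -h2 -mulrA (mulrA k) e -scalerAl -scalerCA -scalerAl.
by rewrite -(mulrA x) h1 mulr1.
Qed.

Local Notation E1 := (wE1 g). Local Notation E2 := (wE2 g).
Local Notation F1 := (wF1 g). Local Notation F2 := (wF2 g).
Local Notation K1 := (wK1 g). Local Notation K1i := (wK1i g).
Local Notation K2 := (wK2 g). Local Notation K2i := (wK2i g).
Local Notation I := (wI g).

Lemma rule_sound x y p : rule x y = Some p -> gen x * gen y = pev p.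
Proof.
have q2 : q ^+ 2 != 0 by rewrite expf_neq0.
have o1 : (1 : Cplx) != 0 by rewrite oner_eq0.
move: hW; rewrite /Wrel /=.
case=> [[cIE1 [cIE2 [cIF1 [cIF2 [cIK1 [cIK1i [cIK2 [cIK2i cIIi]]]]]]]]
  [[IIi [IiI [K1K1i [K1iK1 [K2K2i K2iK2]]]]]]
  [[cK1E2 cK1F2 cK1K2 cK2E1 cK2F1] [[qE1K1 qK1F1 qE2K2 qK2F2]
  [[cE1E2 cE1F2 cF1E2 cF1F2] [cE1F1 cE2F2]]]]].
move: cIE1 cIE2 cIF1 cIF2 cIK1 cIK1i cIK2 cIK2i cK1E2 cK1F2 cK1K2 cK2E1 cK2F1 cE1E2
  cE1F2 cF1E2 cF1F2 => /commE cIE1 /commE cIE2 /commE cIF1 /commE cIF2 /commE cIK1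
  /commE cIK1i /commE cIK2 /commE cIK2i /commE cK1E2 /commE cK1F2 /commE cK1K2
  /commE cK2E1 /commE cK2F1 /commE cE1E2 /commE cE1F2 /commE cF1E2 /commE cF1F2.
move: qE1K1 qK1F1 qE2K2 qK2F2 => /qcommE qE1K1 /qcommE qK1F1 /qcommE qE2K2 /qcommE qK2F2.
have s1 : forall u v : W, u = v -> u = 1 *: v by move=> u v ->; rewrite scale1r.
have eK1iE1 := inv_twist K1K1i K1iK1 q2 qE1K1.
have eK1iE2 := inv_twist K1K1i K1iK1 o1 (s1 _ _ cK1E2).
have eK2iE1 := inv_twist K2K2i K2iK2 o1 (s1 _ _ cK2E1).
have eK2iE2 := inv_twist K2K2i K2iK2 q2 qE2K2.
have eK2K1i := inv_twistr K1K1i K1iK1 o1 (s1 _ _ (esym cK1K2)).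
have eK2iK1 := inv_twist K2K2i K2iK2 o1 (s1 _ _ (esym cK1K2)).
rewrite invr1 scale1r in eK2K1i.
have eK2iK1i := inv_twist K2K2i K2iK2 o1 (s1 _ _ eK2K1i).
have eF1K1i := inv_twistr K1K1i K1iK1 q2 qK1F1.
have eF1K2i := inv_twistr K2K2i K2iK2 o1 (s1 _ _ (esym cK2F1)).
have eF2K1i := inv_twistr K1K1i K1iK1 o1 (s1 _ _ (esym cK1F2)).
have eF2K2i := inv_twistr K2K2i K2iK2 q2 qK2F2.
rewrite invr1 scale1r in eK1iE2.
rewrite invr1 scale1r in eK2iE1.
rewrite invr1 scale1r in eK2iK1.
rewrite invr1 scale1r in eK2iK1i.
rewrite invr1 scale1r in eF1K2i.
rewrite invr1 scale1r in eF2K1i.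
have fE : forall (e f k : W), comm e f = sq q *: k -> f * e = e * f - sq q *: k.
  by move=> e f k <-; rewrite /comm opprB addrC subrK.
rewrite /rule; do 9?(case: x => [|x]); do 9?(case: y => [|y]); try discriminate;
  move=> [<-]; rewrite ?pev_sw ?pev_one /= ?expr0z ?scale1r //.
all: rewrite ?mulr1 ?addr0 ?expr0 ?expr1 ?mulr1 ?intr1 ?intrN1 ?mul1r ?mulN1r ?scale1r ?scaleNr.
- by rewrite (fE _ _ _ cE1F1) cIK1i; apply: auxB.
- by rewrite (fE _ _ _ cE2F2) cIK2; apply: auxB.
Qed.

Lemma pev_appr (p0 : poly) t :
  pev [seq (m.1, m.2 ++ t) | m <- p0] = pev p0 * wev t.
Proof.
elim: p0 => [|m p IH] /=; first by rewrite mul0r.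
by rewrite IH mulrDl wev_cat scalerAl.
Qed.
Lemma pev_consl (p0 : poly) x :
  pev [seq (m.1, x :: m.2) | m <- p0] = gen x * pev p0.
Proof.
elim: p0 => [|m p IH] /=; first by rewrite mulr0.
by rewrite IH mulrDr -scalerCA -scalerAl.
Qed.
Lemma rw_cons x y t : rw [:: x, y & t] =
  match rule x y with
  | Some p => Some [seq (m.1, m.2 ++ t) | m <- p]
  | None => match rw (y :: t) with
            | Some p => Some [seq (m.1, x :: m.2) | m <- p]
            | None => None end
  end.
Proof. by []. Qed.
Lemma rw_sound w p : rw w = Some p -> wev w = pev p.
Proof.
elim: w p => [|x [|y t] IH] p //.
rewrite rw_cons; case e: (rule x y) => [p0|].
  by move=> [<-]; rewrite pev_appr -(rule_sound e) /= mulrA.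
move: IH; case: (rw (y :: t)) => [p1|] // IH [<-].
by rewrite pev_consl -(IH p1).
Qed.
Lemma step_sound p : pev (step p) = pev p.
Proof.
elim: p => [|m p IH] //=; rewrite pev_cat IH; congr (_ + _).
case e: (rw m.2) => [p'|] /=; last by rewrite addr0.
by rewrite pev_scale (rw_sound e).
Qed.
Lemma nf_sound n p : pev (nf n p) = pev p.
Proof. by elim: n p => [|n IH] p //=; rewrite IH step_sound. Qed.

Lemma pev_split (P : pred (seq cmon * seq nat)) l :
  pev l = pev [seq x <- l | P x] + pev [seq x <- l | ~~ P x].
Proof.
elim: l => [|m l IH] /=; first by rewrite addr0.
by case: (P m) => /=; rewrite IH; [rewrite addrA | rewrite addrCA].
Qed.
Lemma pev_same w l : all (fun x : seq cmon * seq nat => x.2 == w) l ->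
  pev l = cev q (flatten [seq x.1 | x <- l]) *: wev w.
Proof.
elim: l => [|m l IH] /=; first by rewrite scale0r.
by case/andP=> /eqP -> h; rewrite IH // cev_cat scalerDl.
Qed.
Lemma pz_sound n p : pz n p -> pev p = 0.
Proof.
elim: n p => [|n IH] [|m l] //= /andP [h1 h2].
rewrite (pev_split (fun x => x.2 == m.2) l) (IH _ h2) addr0.
rewrite (@pev_same m.2); last by apply/allP=> x; rewrite mem_filter => /andP [].
by rewrite -scalerDl -cev_cat (@czero_sound _ q hq0 hqs _ h1) scale0r.
Qed.

Fixpoint sev (e : sx) : Cplx :=
  match e with
  | SQ => q | SQi => q^-1 | SS => (q - q^-1)^-1
  | SAdd a b => sev a + sev b | SSub a b => sev a - sev b
  | SMul a b => sev a * sev b | SExp a n => sev a ^+ n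
  end.
Fixpoint wxev (e : wx) : W :=
  match e with
  | XG n => gen n
  | XAdd a b => wxev a + wxev b | XSub a b => wxev a - wxev b
  | XMul a b => wxev a * wxev b | XScale c a => sev c *: wxev a
  | XOne => 1 | XZero => 0
  end.
Lemma s2c_sound e : cev q (s2c e) = sev e.
Proof.
elim: e => //=.
- by rewrite mul1r expr1z mulr1 addr0.
- by rewrite mul1r exprN1 mulr1 addr0.
- by rewrite mul1r expr0z mul1r expr1 addr0.
- by move=> a IHa b IHb; rewrite cev_cat IHa IHb.
- move=> a IHa b IHb; rewrite cev_cat cev_mul // IHa IHb /=.
  by rewrite expr0z !mulr1 addr0 mulN1r.
- by move=> a IHa b IHb; rewrite cev_mul // IHa IHb.
- move=> a IHa n; elim: n => [|n IHn] /=.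
    by rewrite expr0z mulr1 expr0 mulr1 addr0.
  by rewrite cev_mul // IHn IHa exprS.
Qed.
Lemma w2p_sound e : pev (w2p e) = wxev e.
Proof.
elim: e => //=.
- by move=> n; rewrite mul1r !mulr1 !addr0 expr0z scale1r.
- by move=> a IHa b IHb; rewrite pev_cat IHa IHb.
- move=> a IHa b IHb; rewrite pev_cat pev_scale IHa IHb /=.
  by rewrite expr0z !mulr1 addr0 scaleN1r.
- by move=> a IHa b IHb; rewrite pev_mul IHa IHb.
- by move=> c a IHa; rewrite pev_scale IHa s2c_sound.
- exact: pev_one.
Qed.
Lemma check_sound e : check e -> wxev e = 0.
Proof. by rewrite /check => /pz_sound; rewrite nf_sound w2p_sound. Qed.
Lemma reflect_eq e1 e2 : check (XSub e1 e2) -> wxev e1 = wxev e2.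
Proof. by move/check_sound => /= /eqP; rewrite subr_eq0 => /eqP. Qed.
End NC.

Ltac reify_s q t :=
  lazymatch t with
  | (q - q^-1)^-1 => constr:(SS)
  | q^-1 => constr:(SQi)
  | q => constr:(SQ)
  | ?a - ?b => let x := reify_s q a in let y := reify_s q b in constr:(SSub x y)
  | ?a + ?b => let x := reify_s q a in let y := reify_s q b in constr:(SAdd x y)
  | ?a * ?b => let x := reify_s q a in let y := reify_s q b in constr:(SMul x y)
  | ?a ^+ ?n => let x := reify_s q a in constr:(SExp x n)
  end.
Ltac reify_w q g t :=
  lazymatch t with
  | wE1 g => constr:(XG 0) | wE2 g => constr:(XG 1) | wK1 g => constr:(XG 2)
  | wK1i g => constr:(XG 3) | wK2 g => constr:(XG 4) | wK2i g => constr:(XG 5)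
  | wI g => constr:(XG 6) | wF1 g => constr:(XG 7) | wF2 g => constr:(XG 8)
  | ?a - ?b => let x := reify_w q g a in let y := reify_w q g b in constr:(XSub x y)
  | ?a + ?b => let x := reify_w q g a in let y := reify_w q g b in constr:(XAdd x y)
  | ?c *: ?a => let x := reify_s q c in let y := reify_w q g a in constr:(XScale x y)
  | ?a * ?b => let x := reify_w q g a in let y := reify_w q g b in constr:(XMul x y)
  | 1 => constr:(XOne)
  | 0 => constr:(XZero)
  end.
Ltac reflect_tac q g hq0 hqs hW :=
  lazymatch goal with |- ?L = ?R =>
    let e1 := reify_w q g L in let e2 := reify_w q g R in
    change (wxev q g e1 = wxev q g e2);
    apply: (reflect_eq hq0 hqs hW); vm_compute; reflexivity
  end.



Lemma X1aux (V : lmodType Cplx) (p m : Cplx) (Z A : V) : p != 0 ->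
  (p * m)^-1 *: Z + A = p^-1 *: (m^-1 *: Z + p *: A).
Proof. by move=> hp; rewrite scalerDr !scalerA mulVf // scale1r invfM. Qed.

Section T.
Variables (q : Cplx) (W : algType Cplx) (g : Wgens W).
Hypotheses (hq0 : q != 0) (hqs : q - q^-1 != 0) (hW : Wrel q g).
Definition imA := wK2i g.
Definition imB := (q - q^-1) ^+ 2 *: ((wE1 g + wK1i g * wE2 g) * (wF1 g * wK2 g + wF2 g))
             + q^-1 *: (wK1 g * wK2 g) + q *: (wK1i g * wK2i g).
Definition imC := wI g * wK1i g - (q * (q - q^-1) ^+ 2) *: (wE1 g * wF2 g * wK2i g).
Definition al := Lambda2 q g + Lambda1 q g * wK1i g * wK2i g.
Definition be := wI g * wK1i g * wK2i g.
Definition ga := Lambda1 q g + Lambda2 q g * wK1i g * wK2i g.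
Ltac go := rewrite /imA /imB /imC /al /be /ga /Halpha /Hbeta /Hgamma /comm /qcomm /Lambda1 /Lambda2;
  reflect_tac q g hq0 hqs hW.
Lemma ta : Halpha q imA imB imC = al. Proof. go. Qed.
Lemma tb : Hbeta q imA imB imC = be. Proof. go. Qed.
Lemma tc : Hgamma q imA imB imC = ga. Proof. go. Qed.
Lemma c1 : comm al imA = 0. Proof. go. Qed.
Lemma c2 : comm al imB = 0. Proof. go. Qed.
Lemma c3 : comm al imC = 0. Proof. go. Qed.
Lemma c4 : comm be imA = 0. Proof. go. Qed.
Lemma c5 : comm be imB = 0. Proof. go. Qed.
Lemma c6 : comm be imC = 0. Proof. go. Qed.
Lemma c7 : comm ga imA = 0. Proof. go. Qed.
Lemma c8 : comm ga imB = 0. Proof. go. Qed.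
Lemma c9 : comm ga imC = 0. Proof. go. Qed.

Lemma commZ (x y : W) (c : Cplx) : comm (c *: x) y = c *: comm x y.
Proof. by rewrite /comm scalerBr -scalerAl -scalerCA -scalerAl. Qed.

Hypothesis hqp : q + q^-1 != 0.

Lemma X1E : (q ^+ 2 - q^-2)^-1 *: qcomm q imB imC + imA = (q + q^-1)^-1 *: al.
Proof.
have e : q ^+ 2 - q^-2 = (q + q^-1) * (q - q^-1) by field.
by rewrite -ta /Halpha e; apply: X1aux.
Qed.
Lemma X2E : qcomm q imC imA = (q - q^-1) *: be.
Proof. by rewrite -tb /Hbeta scalerA mulfV // scale1r. Qed.
Lemma X3E : (q ^+ 2 - q^-2)^-1 *: qcomm q imA imB + imC = (q + q^-1)^-1 *: ga.
Proof.
have e : q ^+ 2 - q^-2 = (q + q^-1) * (q - q^-1) by field.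
by rewrite -tc /Hgamma e; apply: X1aux.
Qed.
Lemma hrel : Hrel q imA imB imC.
Proof.
rewrite /Hrel X1E X2E X3E !commZ c1 c2 c3 c4 c5 c6 c7 c8 c9 !scaler0.
by do !split.
Qed.
End T.

Lemma fZ (H W : algType Cplx) (f : {lrmorphism H -> W}) (k : Cplx) (x : H) :
  f (k *: x) = k *: f x.
Proof. exact: linearZ. Qed.
Lemma fB (H W : algType Cplx) (f : {lrmorphism H -> W}) (x y : H) :
  f (x - y) = f x - f y.
Proof. exact: raddfB. Qed.
Lemma fD (H W : algType Cplx) (f : {lrmorphism H -> W}) (x y : H) :
  f (x + y) = f x + f y.
Proof. exact: raddfD. Qed.
Lemma fM (H W : algType Cplx) (f : {lrmorphism H -> W}) (x y : H) :
  f (x * y) = f x * f y.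
Proof. exact: rmorphM. Qed.
Lemma fqc (q : Cplx) (H W : algType Cplx) (f : {lrmorphism H -> W}) (x y : H) :
  f (qcomm q x y) = qcomm q (f x) (f y).
Proof.
rewrite /qcomm; etransitivity; first exact: fB.
congr (_ - _); (etransitivity; first exact: fZ); congr (_ *: _); exact: fM.
Qed.
Lemma morph_alpha (q : Cplx) (H W : algType Cplx) (f : {lrmorphism H -> W}) (a b c : H) :
  f (Halpha q a b c) = Halpha q (f a) (f b) (f c).
Proof.
rewrite /Halpha; etransitivity; first exact: fD.
congr (_ + _); (etransitivity; first exact: fZ); congr (_ *: _); exact: fqc.
Qed.
Lemma morph_beta (q : Cplx) (H W : algType Cplx) (f : {lrmorphism H -> W}) (a b c : H) :
  f (Hbeta q a b c) = Hbeta q (f a) (f b) (f c).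
Proof.
rewrite /Hbeta; (etransitivity; first exact: fZ); congr (_ *: _); exact: fqc.
Qed.
Lemma morph_gamma (q : Cplx) (H W : algType Cplx) (f : {lrmorphism H -> W}) (a b c : H) :
  f (Hgamma q a b c) = Hgamma q (f a) (f b) (f c).
Proof.
rewrite /Hgamma; etransitivity; first exact: fD.
congr (_ + _); (etransitivity; first exact: fZ); congr (_ *: _); exact: fqc.
Qed.

Theorem mainTheorem5 (q : Cplx) (hq : not_root_of_unity q)
  (W : algType Cplx) (g : Wgens W) (hW : is_Wq q g)
  (H : algType Cplx) (a b c : H) (hH : is_Hq q a b c) :
  let E1 := wE1 g in let E2 := wE2 g in let F1 := wF1 g in let F2 := wF2 g in
  let K1 := wK1 g in let K1i := wK1i g in let K2 := wK2 g in
  let K2i := wK2i g in let I := wI g in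
  let imA := K2i in
  let imB := (q - q^-1) ^+ 2 *: ((E1 + K1i * E2) * (F1 * K2 + F2))
             + q^-1 *: (K1 * K2) + q *: (K1i * K2i) in
  let imC := I * K1i - (q * (q - q^-1) ^+ 2) *: (E1 * F2 * K2i) in
  exists f : {lrmorphism H -> W},
    ([/\ f a = imA, f b = imB & f c = imC] /\
     forall f' : {lrmorphism H -> W},
       [/\ f' a = imA, f' b = imB & f' c = imC] -> forall x, f' x = f x) /\
    [/\ f (Halpha q a b c) = Lambda2 q g + Lambda1 q g * K1i * K2i,
        f (Hbeta q a b c) = I * K1i * K2i
      & f (Hgamma q a b c) = Lambda1 q g + Lambda2 q g * K1i * K2i].
Proof.
case: hq => hq0 hqn.
have hq2 : q ^+ 2 != 1 by apply: hqn.
have hq4 : q ^+ 4 != 1 by apply: hqn.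
have hqs : q - q^-1 != 0.
  apply: contra hq2 => /eqP h; apply/eqP.
  have : q * (q - q^-1) = 0 by rewrite h mulr0.
  by rewrite mulrBr mulfV // expr2 => /eqP; rewrite subr_eq0 => /eqP.
have hqp : q + q^-1 != 0.
  apply: contra hq4 => /eqP h; apply/eqP.
  have h2 : q ^+ 2 = -1.
    have : q * (q + q^-1) = 0 by rewrite h mulr0.
    by rewrite mulrDr mulfV // expr2 => /eqP; rewrite addr_eq0 => /eqP.
  by rewrite (_ : 4%N = 2 * 2)%N // exprM h2 expr2 mulrNN mulr1.
case: hW => hWr _.
case: hH => _ /(_ W _ _ _ (hrel hq0 hqs hWr hqp)) [f [[fa fb fc] fu]].
move=> E1 E2 F1 F2 K1 K1i K2 K2i I imA' imB' imC'.
exists f; split; first by split.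
rewrite morph_alpha morph_beta morph_gamma fa fb fc.
split; [exact: ta | exact: tb | exact: tc].
Qed.
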